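(* Let $m,n$ be positive integers and $p$ an odd prime not dividing $m$. For $r\in\mathbb Z$ define $K_p(r,m)=\sum_{1\le k\le p-1,\ m\mid k-rp}\frac1k$. Then $$B_{p-1}\Big(\Big\{\frac{pn}m\Big\}\Big)-B_{p-1}\equiv m\sum_{r=1}^nK_p(r,m)\equiv-\sum_{\substack{1\le k\le\lfloor pn/m\rfloor\\ p\nmid k}}\frac1k\pmod p,$$ and moreover $K_p(r,m)\equiv-K_p(1-r,m)\pmod p$ for every $r\in\mathbb Z$.
   Context: $\{x\}$ denotes the fractional part and $\lfloor x\rfloor$ the integer part of $x$; $B_n(x)$ is the $n$th Bernoulli polynomial and $B_n=B_n(0)$. Congruences modulo $p$ are between rational numbers whose denominators are prime to $p$. *)

(* Defs.v *)
From HB Require Import structures.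
From mathcomp Require Import all_boot all_order all_algebra.
Set Implicit Arguments. Unset Strict Implicit. Unset Printing Implicit Defensive.
Import Order.TTheory GRing.Theory Num.Theory.
Local Open Scope ring_scope.

(* [:: B_0; ...; B_n], via sum_{k=0}^{N} C(N+1,k) B_k = 0 for N >= 1, B_0 = 1 *)
Fixpoint bern_seq (n : nat) : seq rat :=
  match n with
  | 0 => [:: 1]
  | n'.+1 => let s := bern_seq n' in
      rcons s (- (n'.+2%:R)^-1 *
               \sum_(k < n'.+1) ('C(n'.+2, k))%:R * nth 0 s k)
  end.

(* Bernoulli numbers B_n (convention B_1 = -1/2, i.e. B_n = B_n(0)) *)
Definition bernoulli (n : nat) : rat := nth 0 (bern_seq n) n.

Definition bernpoly (n : nat) (x : rat) : rat :=
  \sum_(k < n.+1) ('C(n, k))%:R * bernoulli k * x ^+ (n - k).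

Definition fracpart (x : rat) : rat := x - (Num.floor x)%:~R.

Definition pintegral (p : nat) (x : rat) : bool := ~~ (p %| `|denq x|)%N.

Definition ratcongp (p : nat) (a b : rat) : Prop :=
  [/\ pintegral p a, pintegral p b & (p%:Z %| numq (a - b))%Z].

Definition Kp (p : nat) (r : int) (m : nat) : rat :=
  \sum_(1 <= k < p | (m%:Z %| k%:Z - r * p%:Z)%Z) (k%:R)^-1.

(* Main.v *)
Require Import Defs.
From HB Require Import structures.
From mathcomp Require Import all_boot all_order all_algebra.
From mathcomp Require Import ring lra zify.
Set Implicit Arguments. Unset Strict Implicit. Unset Printing Implicit Defensive.
Import Order.TTheory GRing.Theory Num.Theory.
Local Open Scope ring_scope.

Definition piq (p : nat) (x : rat) :=
  exists a b : int, ~~ (p %| `|b|)%N /\ x = a%:~R / b%:~R.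
Definition pzq (p : nat) (x : rat) :=
  exists a b : int, ~~ (p %| `|b|)%N /\ x = (p%:Z * a)%:~R / b%:~R.

Lemma nz_of (p : nat) (b : int) : ~~ (p %| `|b|)%N -> (b%:~R : rat) != 0.
Proof. by move=> hb; rewrite intr_eq0; apply/eqP=> b0; move: hb; rewrite b0 dvdn0. Qed.

Lemma ndvdM p (b d : int) : prime p -> ~~ (p %| `|b|)%N -> ~~ (p %| `|d|)%N ->
  ~~ (p %| `|(b * d)%R|)%N.
Proof. by move=> pp hb hd; rewrite abszM Euclid_dvdM // negb_or hb hd. Qed.

Lemma piq_int p (z : int) : prime p -> piq p z%:~R.
Proof. move=> pp; exists z, 1; split; first by rewrite absz1 dvdn1; apply/eqP=> p1; rewrite p1 in pp.
by rewrite divr1. Qed.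

Lemma piq_add p x y : prime p -> piq p x -> piq p y -> piq p (x + y).
Proof.
move=> pp [a [b [hb ->]]] [c [d [hd ->]]].
exists (a * d + c * b), (b * d); split; first exact: ndvdM.
have := nz_of hb; have := nz_of hd => hd' hb'.
rewrite intrD !intrM; field; by rewrite hb' hd'.
Qed.

Lemma piq_mul p x y : prime p -> piq p x -> piq p y -> piq p (x * y).
Proof.
move=> pp [a [b [hb ->]]] [c [d [hd ->]]].
exists (a * c), (b * d); split; first exact: ndvdM.
have := nz_of hb; have := nz_of hd => hd' hb'.
rewrite !intrM; field; by rewrite hb' hd'.
Qed.

Lemma piq_opp p x : piq p x -> piq p (- x).
Proof.
move=> [a [b [hb ->]]]; exists (- a), b; split => //.
by rewrite intrN mulNr.
Qed.

Lemma piq_nat p k : prime p -> piq p k%:R.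
Proof. by move=> pp; have := piq_int (k%:Z) pp; rewrite pmulrn. Qed.

Lemma piq_invz p (k : int) : ~~ (p %| `|k|)%N -> piq p (k%:~R)^-1.
Proof. by move=> hk; exists 1, k; split => //; rewrite div1r. Qed.

Lemma piq_invn p (k : nat) : ~~ (p %| k)%N -> piq p (k%:R)^-1.
Proof. by move=> hk; have := @piq_invz p k%:Z hk; rewrite pmulrn. Qed.

Lemma piq_sum p I (r : seq I) (P : pred I) (F : I -> rat) : prime p ->
  (forall i, P i -> piq p (F i)) -> piq p (\sum_(i <- r | P i) F i).
Proof.
move=> pp h; apply: (big_ind (piq p)) => //; first exact: (piq_nat 0 pp).
by move=> ???; apply: piq_add.
Qed.

Lemma piq_exp p x k : prime p -> piq p x -> piq p (x ^+ k).
Proof.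
move=> pp hx; elim: k => [|k ih]; first by rewrite expr0; exact: (piq_nat 1 pp).
by rewrite exprS; apply: piq_mul.
Qed.

Lemma pzq_piq p x : pzq p x -> piq p x.
Proof. by move=> [a [b [hb ->]]]; exists (p%:Z * a), b. Qed.

Lemma pzq_add p x y : prime p -> pzq p x -> pzq p y -> pzq p (x + y).
Proof.
move=> pp [a [b [hb ->]]] [c [d [hd ->]]].
exists (a * d + c * b), (b * d); split; first exact: ndvdM.
have := nz_of hb; have := nz_of hd => hd' hb'.
rewrite !(intrD, intrM); field; by rewrite hb' hd'.
Qed.

Lemma pzq_mul p x y : prime p -> pzq p x -> piq p y -> pzq p (x * y).
Proof.
move=> pp [a [b [hb ->]]] [c [d [hd ->]]].
exists (a * c), (b * d); split; first exact: ndvdM.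
have := nz_of hb; have := nz_of hd => hd' hb'.
rewrite !intrM; field; by rewrite hb' hd'.
Qed.

Lemma pzq_opp p x : pzq p x -> pzq p (- x).
Proof.
move=> [a [b [hb ->]]]; exists (- a), b; split => //.
by rewrite mulrN intrN mulNr.
Qed.

Lemma pzq0 p : prime p -> pzq p 0.
Proof.
move=> pp; exists 0, 1; split; last by rewrite mulr0 mul0r.
by rewrite absz1 dvdn1; apply/eqP=> p1; rewrite p1 in pp.
Qed.

Lemma pzq_sum p I (r : seq I) (P : pred I) (F : I -> rat) : prime p ->
  (forall i, P i -> pzq p (F i)) -> pzq p (\sum_(i <- r | P i) F i).
Proof.
move=> pp h; apply: (big_ind (pzq p)) => //; first exact: pzq0.
by move=> ???; apply: pzq_add.
Qed.

Lemma pzq_pmul p y : prime p -> piq p y -> pzq p (p%:R * y).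
Proof.
move=> pp hy; apply: pzq_mul => //; exists 1, 1; split.
  by rewrite absz1 dvdn1; apply/eqP=> p1; rewrite p1 in pp.
by rewrite mulr1 divr1 pmulrn.
Qed.

Lemma pintegralE p x : pintegral p x <-> piq p x.
Proof.
split.
  by move=> h; exists (numq x), (denq x); split => //; rewrite divq_num_den.
move=> [a [b [hb hx]]]; have hb' := nz_of hb.
rewrite /pintegral; apply/negP => hd; move/negP: hb; apply.
have e : numq x * b = a * denq x.
  apply/eqP; rewrite -(eqr_int rat) !intrM numqE hx; apply/eqP; field.
  exact: hb'.
have : (`|denq x| %| `|numq x| * `|b|)%N by rewrite -abszM e abszM dvdn_mull.
rewrite Gauss_dvdr; first by apply: dvdn_trans.
by rewrite coprime_sym coprime_num_den.
Qed.

Lemma pzq_numq p x : prime p -> pzq p x -> (p%:Z %| numq x)%Z.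
Proof.
move=> pp [a [b [hb hx]]].
have hb' := nz_of hb.
have e : numq x * b = p%:Z * a * denq x.
  apply/eqP; rewrite -(eqr_int rat) !intrM numqE hx; apply/eqP.
  rewrite -!intrM; field.
  exact: hb'.
have : (p %| `|numq x| * `|b|)%N by rewrite -abszM e !abszM -mulnA dvdn_mulr.
by rewrite Euclid_dvdM // (negbTE hb) orbF dvdzE.
Qed.

Definition cq p a b := [/\ piq p a, piq p b & pzq p (a - b)].

Lemma cq_ratcongp p a b : prime p -> cq p a b -> ratcongp p a b.
Proof.
move=> pp [ha hb hab]; split; try exact/pintegralE.
exact: pzq_numq.
Qed.

Lemma cq_refl p a : prime p -> piq p a -> cq p a a.
Proof. by move=> pp ha; split => //; rewrite subrr; apply: pzq0. Qed.

Lemma cq_sym p a b : cq p a b -> cq p b a.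
Proof. by move=> [ha hb hab]; split => //; rewrite -opprB; apply: pzq_opp. Qed.

Lemma cq_trans p a b c : prime p -> cq p a b -> cq p b c -> cq p a c.
Proof.
move=> pp [ha hb hab] [_ hc hbc]; split => //.
by have := pzq_add pp hab hbc; rewrite addrA subrK.
Qed.

Lemma cq_add p a b c d : prime p -> cq p a b -> cq p c d -> cq p (a + c) (b + d).
Proof.
move=> pp [ha hb hab] [hc hd hcd]; split; try exact: piq_add.
by have := pzq_add pp hab hcd; rewrite opprD addrACA.
Qed.

Lemma cq_opp p a b : cq p a b -> cq p (- a) (- b).
Proof.
by move=> [ha hb hab]; split; try exact: piq_opp; rewrite -opprD; apply: pzq_opp.
Qed.

Lemma cq_mul p a b c d : prime p -> cq p a b -> cq p c d -> cq p (a * c) (b * d).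
Proof.
move=> pp [ha hb hab] [hc hd hcd]; split; try exact: piq_mul.
have -> : a * c - b * d = (c - d) * a + (a - b) * d by ring.
by apply: pzq_add => //; apply: pzq_mul.
Qed.

Lemma cq_exp p a b k : prime p -> cq p a b -> cq p (a ^+ k) (b ^+ k).
Proof.
move=> pp h; elim: k => [|k ih]; first by rewrite !expr0; apply: cq_refl (piq_nat 1 pp).
by rewrite !exprS; apply: cq_mul.
Qed.

Lemma cq_sum p I (r : seq I) (P : pred I) (F G : I -> rat) : prime p ->
  (forall i, P i -> cq p (F i) (G i)) ->
  cq p (\sum_(i <- r | P i) F i) (\sum_(i <- r | P i) G i).
Proof.
move=> pp h; elim: r => [|x r ih]; first by rewrite !big_nil; apply: cq_refl (piq_nat 0 pp).
rewrite !big_cons; case: ifP => // Px; exact: cq_add (h _ Px) ih.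
Qed.

Lemma ndvd_lt p k : (0 < k)%N -> (k < p)%N -> ~~ (p %| k)%N.
Proof. by move=> k0 kp; apply/negP => /(dvdn_leq k0); rewrite leqNgt kp. Qed.

Lemma piq_Kp p r m : prime p -> piq p (Kp p r m).
Proof.
move=> pp; rewrite /Kp big_nat_cond; apply: piq_sum => // k /andP [/andP [k1 kp] _].
by apply: piq_invn; apply: ndvd_lt.
Qed.

Lemma inv_pair p k : prime p -> (0 < k)%N -> (k < p)%N ->
  pzq p ((k%:R)^-1 + ((p - k)%N%:R)^-1 : rat).
Proof.
move=> pp k0 kp.
have hk : (k%:R : rat) != 0 by rewrite pnatr_eq0 -lt0n.
have hpk : ((p - k)%N%:R : rat) != 0 by rewrite pnatr_eq0 subn_eq0 -ltnNge.
have -> : (k%:R)^-1 + ((p - k)%N%:R)^-1 =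
   p%:R * ((k%:R)^-1 * ((p - k)%N%:R)^-1) :> rat.
  move: hpk; rewrite natrB ?(ltnW kp) // => hpk; field; by rewrite hk hpk.
apply: pzq_pmul => //; apply: piq_mul => //; apply: piq_invn; apply: ndvd_lt => //.
  by rewrite subn_gt0.
by rewrite ltn_subrL k0 (ltn_trans k0 kp).
Qed.

Lemma Kp_rev p r m : prime p -> Kp p (1 - r) m =
  \sum_(1 <= k < p | (m%:Z %| k%:Z - r * p%:Z)%Z) ((p - k)%N%:R)^-1.
Proof.
move=> pp; rewrite /Kp big_nat_rev; apply: congr_big_nat => // k /andP [k1 kp].
  have -> : (1 + p - k.+1 = p - k)%N by rewrite add1n subSS.
  rewrite -subzn ?(ltnW kp) //.
  have -> : (p%:Z - k%:Z - (1 - r) * p%:Z) = - (k%:Z - r * p%:Z) by ring.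
  by rewrite !dvdzE abszN.
Qed.

Lemma Kp_sym p m r : prime p -> cq p (Kp p r m) (- Kp p (1 - r) m).
Proof.
move=> pp; split; [exact: piq_Kp | exact/piq_opp/piq_Kp |].
rewrite opprK Kp_rev // /Kp -big_split /= big_nat_cond.
by apply: pzq_sum => // k /andP [/andP [k1 kp] _]; apply: inv_pair.
Qed.

Lemma part_a p m s : prime p -> ~~ (p %| m)%N ->
  cq p (m%:R * Kp p (s.+1)%:Z m)
       (- \sum_(1 <= k < p | (m %| k + s * p)%N) (m%:R / (k + s * p)%N%:R)).
Proof.
move=> pp pm.
have -> : (s.+1)%:Z = 1 - (- s%:Z) by rewrite opprK -addn1 PoszD addrC.
rewrite Kp_rev // mulr_sumr -sumrN.
have e : forall k : nat, (m%:Z %| k%:Z - - s%:Z * p%:Z)%Z = (m %| k + s * p)%N.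
  by move=> k; rewrite mulNr opprK -PoszM -PoszD.
under eq_bigl => k do rewrite e.
rewrite big_nat_cond [X in cq _ _ X]big_nat_cond.
apply: cq_sum => // k /andP [/andP [k1 kp] _].
have kp0 : ~~ (p %| k + s * p)%N by rewrite dvdn_addl ?dvdn_mull // ndvd_lt.
have pk0 : ~~ (p %| p - k)%N.
  by apply: ndvd_lt; [rewrite subn_gt0 | rewrite ltn_subrL k1 (ltn_trans k1 kp)].
split.
- by apply: piq_mul => //; [apply: piq_nat | apply: piq_invn].
- by apply: piq_opp; apply: piq_mul => //; [apply: piq_nat | apply: piq_invn].
rewrite opprK.
have hk : ((k + s * p)%N%:R : rat) != 0.
  by rewrite pnatr_eq0; apply/eqP => e0; move: kp0; rewrite e0 dvdn0.
have hpk : ((p - k)%N%:R : rat) != 0.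
  by rewrite pnatr_eq0; apply/eqP => e0; move: pk0; rewrite e0 dvdn0.
have -> : m%:R * ((p - k)%N%:R)^-1 + m%:R / (k + s * p)%N%:R =
   p%:R * ((m * s.+1)%N%:R * (((p - k)%N%:R)^-1 * ((k + s * p)%N%:R)^-1)) :> rat.
  move: hk hpk; rewrite natrB ?(ltnW kp) // !natrD !natrM => hk hpk.
  rewrite -addn1 natrD; field; by rewrite hk hpk.
apply: pzq_pmul => //; apply: piq_mul => //; first exact: piq_nat.
by apply: piq_mul => //; apply: piq_invn.
Qed.

Lemma part_b p m n : prime p ->
  \sum_(0 <= s < n) \sum_(1 <= k < p | (m %| k + s * p)%N) (m%:R / (k + s * p)%N%:R)
  = \sum_(0 <= t < n * p | (m %| t)%N && ~~ (p %| t)%N) (m%:R / t%:R : rat).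
Proof.
move=> pp; have p0 := prime_gt0 pp.
elim: n => [|n ih]; first by rewrite mul0n !big_geq.
rewrite big_nat_recr // ih mulSnr [RHS](@big_cat_nat _ _ _ (n * p)) ?leq_addr //=.
congr (_ + _).
rewrite (big_addn 0 _ (n * p)) addKn [RHS]big_ltn_cond //= add0n (dvdn_mull _ (dvdnn p)) /= ?andbF.
apply: congr_big_nat => // k /andP [k1 kp].
by rewrite (dvdn_addl k (dvdn_mull n (dvdnn p))) (ndvd_lt k1 kp) andbT.
Qed.

Lemma sum_mult m a (F : nat -> rat) : (0 < m)%N ->
  \sum_(0 <= t < a.+1 | (m %| t)%N) F t = \sum_(0 <= j < (a %/ m).+1) F (m * j)%N.
Proof.
move=> m0; rewrite big_mkcond /=.
elim: a => [|a ih].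
  by rewrite div0n !big_nat1 dvdn0; congr F; lia.
rewrite big_nat_recr //= ih divnS //.
case: ifP => hd; last by rewrite addr0.
have e : ((a %/ m).+1 = a.+1 %/ m)%N by rewrite divnS // hd.
by rewrite add1n [RHS]big_nat_recr //= [in F (m * _)%N]e mulnC divnK.
Qed.

Lemma part_c p m n : prime p -> ~~ (p %| m)%N -> (0 < m)%N ->
  \sum_(0 <= t < (n * p)%N | (m %| t)%N && ~~ (p %| t)%N) (m%:R / t%:R : rat)
  = \sum_(1 <= k < (p * n %/ m).+1 | ~~ (p %| k)%N) (k%:R : rat)^-1.
Proof.
move=> pp pm m0.
rewrite big_mkcondr /=.
have -> : \sum_(0 <= t < (n * p)%N | (m %| t)%N) (if ~~ (p %| t)%N then m%:R / t%:R else 0)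
  = \sum_(0 <= t < (n * p).+1 | (m %| t)%N) (if ~~ (p %| t)%N then m%:R / t%:R else 0 : rat).
  by rewrite big_mkcond [RHS]big_mkcond big_nat_recr //= (dvdn_mull n (dvdnn p)) /= if_same addr0.
rewrite sum_mult // mulnC [LHS]big_ltn_cond //= [RHS]big_mkcond.
rewrite muln0 dvdn0 /= add0r.
apply: eq_big_nat => j /andP [j1 _].
rewrite Euclid_dvdM // (negbTE pm) /=.
case: ifP => // _.
have hm : (m%:R : rat) != 0 by rewrite pnatr_eq0 -lt0n.
have hj : (j%:R : rat) != 0 by rewrite pnatr_eq0 -lt0n.
by rewrite natrM; field; rewrite hm hj.
Qed.

Lemma part2 p m n : prime p -> ~~ (p %| m)%N -> (0 < m)%N ->
  cq p (m%:R * \sum_(1 <= r < n.+1) Kp p r%:Z m)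
    (- \sum_(1 <= k < (p * n %/ m).+1 | ~~ (p %| k)%N) (k%:R : rat)^-1).
Proof.
move=> pp pm m0.
rewrite -part_c // -part_b // big_add1 /= mulr_sumr -sumrN.
by apply: cq_sum => // s _; apply: part_a.
Qed.

Lemma size_bern n : size (bern_seq n) = n.+1.
Proof. by elim: n => //= n ih; rewrite size_rcons ih. Qed.

Lemma bern_nth n k : (k <= n)%N -> nth 0 (bern_seq n) k = bernoulli k.
Proof.
elim: n => [|n ih]; first by rewrite leqn0 => /eqP ->.
rewrite leq_eqVlt => /orP [/eqP -> // | kn].
by rewrite /= nth_rcons size_bern kn ih.
Qed.

Lemma bern_succ n : bernoulli n.+1 =
  - ((n.+2)%:R)^-1 * \sum_(k < n.+1) ('C(n.+2, k))%:R * bernoulli k.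
Proof.
rewrite {1}/bernoulli /= nth_rcons size_bern ltnn eqxx; congr (_ * _).
by apply: eq_bigr => k _; rewrite bern_nth // -ltnS.
Qed.

Lemma bern0 : bernoulli 0 = 1.
Proof. by []. Qed.

Lemma bern_rec M : (1 < M)%N -> \sum_(k < M) ('C(M, k))%:R * bernoulli k = 0.
Proof.
case: M => [//|[//|n]] _.
rewrite big_ord_recr /= binSn bern_succ.
have h : ((n.+2)%:R : rat) != 0 by rewrite pnatr_eq0.
by rewrite mulrA mulrN divff // mulN1r subrr.
Qed.

Lemma piq_bern p n : prime p -> (n.+1 < p)%N -> piq p (bernoulli n).
Proof.
move=> pp; elim: n {-2}n (leqnn n) => [|N ih] n.
  by rewrite leqn0 => /eqP -> _; rewrite bern0; exact: piq_nat 1 pp.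
rewrite leq_eqVlt => /orP [/eqP -> hp | hn]; last by apply: ih.
rewrite bern_succ; apply: piq_mul => //.
  apply: piq_opp; apply: piq_invn; apply: ndvd_lt => //.
apply: piq_sum => // k _; apply: piq_mul => //; first exact: piq_nat.
apply: ih; first by rewrite -ltnS.
by have := ltn_ord k; lia.
Qed.

Lemma binom_swap N i j : (i + j <= N)%N ->
  ('C(N, j) * 'C(N - j, i) = 'C(N, i) * 'C(N - i, j))%N.
Proof.
move=> h.
have f1 := @bin_fact N j ltac:(lia). have f2 := @bin_fact (N - j) i ltac:(lia).
have f3 := @bin_fact N i ltac:(lia). have f4 := @bin_fact (N - i) j ltac:(lia).
have e : (N - j - i = N - i - j)%N by lia.
rewrite e in f2.
apply/eqP; rewrite -(@eqn_pmul2r (i`! * j`! * (N - i - j)`!)); last by rewrite !muln_gt0 !fact_gt0.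
apply/eqP.
have -> : ('C(N, j) * 'C(N - j, i) * (i`! * j`! * (N - i - j)`!) =
   'C(N, j) * (j`! * ('C(N - j, i) * (i`! * (N - i - j)`!))))%N by ring.
have -> : ('C(N, i) * 'C(N - i, j) * (i`! * j`! * (N - i - j)`!) =
   'C(N, i) * (i`! * ('C(N - i, j) * (j`! * (N - i - j)`!))))%N by ring.
by rewrite f2 f4 f1 f3.
Qed.

Lemma pow_diff (x : rat) M :
  (x + 1) ^+ M - x ^+ M = \sum_(0 <= i < M) ('C(M, i))%:R * x ^+ i.
Proof.
rewrite exprD1n big_ord_recr /= binn mulr1n addrK big_mkord.
by apply: eq_bigr => i _; rewrite mulr_natl.
Qed.

Lemma bernpoly_nat N x :
  bernpoly N x = \sum_(0 <= j < N.+1) ('C(N, j))%:R * bernoulli j * x ^+ (N - j).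
Proof. by rewrite /bernpoly big_mkord. Qed.

Lemma inner_sum N : (0 < N)%N ->
  \sum_(0 <= j < N) ('C(N, j))%:R * bernoulli j = (N == 1)%:R :> rat.
Proof.
case: N => [//|[|n]] _; first by rewrite big_nat1 bin0 bern0 mulr1.
by rewrite big_mkord bern_rec.
Qed.

Lemma bern_diff N x : (0 < N)%N ->
  bernpoly N (x + 1) - bernpoly N x = N%:R * x ^+ N.-1.
Proof.
move=> N0.
rewrite !bernpoly_nat -sumrB.
transitivity (\sum_(0 <= j < N.+1) \sum_(0 <= i < N)
   (if (i < N - j)%N then ('C(N, j))%:R * bernoulli j * (('C(N - j, i))%:R * x ^+ i)
    else 0)).
  apply: eq_big_nat => j /andP [_ hj].
  rewrite -mulrBr pow_diff mulr_sumr (big_nat_widen 0 (N - j) N) ?leq_subr // big_mkcond.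
  by apply: eq_big_nat => i _.
rewrite exchange_big_nat /=.
transitivity (\sum_(0 <= i < N) ('C(N, i))%:R * x ^+ i * (N - i == 1)%N%:R).
  apply: eq_big_nat => i /andP [_ hi].
  rewrite -inner_sum ?subn_gt0 // mulr_sumr (big_nat_widen 0 (N - i) N.+1); last by lia.
  rewrite [RHS]big_mkcond; apply: eq_big_nat => j /andP [_ hj] /=.
  have -> : (i < N - j)%N = (j < N - i)%N by lia.
  case: ifP => // hji.
  transitivity (('C(N, j) * 'C(N - j, i))%N%:R * bernoulli j * x ^+ i).
    by rewrite natrM; ring.
  rewrite binom_swap; last by lia.
  by rewrite natrM; ring.
case: N N0 => // M _.
rewrite big_nat_recr //= subSn // subnn eqxx mulr1 big_nat_cond big1 ?add0r.
  by rewrite binSn mulrC.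
move=> i /andP [/andP [_ hi] _].
by rewrite (_ : (M.+1 - i == 1)%N = false) ?mulr0 //; lia.
Qed.

Lemma fpoly P x : bernpoly P x - bernoulli P =
  \sum_(0 <= j < P) ('C(P, j))%:R * bernoulli j * x ^+ (P - j).
Proof. by rewrite bernpoly_nat big_nat_recr //= binn subnn expr0 mulr1 mul1r addrK. Qed.

Lemma fpoly_cong p x y : prime p -> cq p x y ->
  cq p (bernpoly p.-1 x - bernoulli p.-1) (bernpoly p.-1 y - bernoulli p.-1).
Proof.
move=> pp hxy; rewrite !fpoly big_nat_cond [X in cq _ _ X]big_nat_cond.
apply: cq_sum => // j /andP [/andP [_ hj] _].
apply: cq_mul => //; last exact: cq_exp.
apply: cq_refl => //; apply: piq_mul => //; first exact: piq_nat.
apply: piq_bern => //; have := prime_gt1 pp; lia.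
Qed.

Lemma fneg P N : (0 < P)%N -> odd P.-1 ->
  bernpoly P (- N%:R) - bernoulli P = \sum_(1 <= k < N.+1) P%:R * (k%:R)^+P.-1.
Proof.
move=> P0 hodd; elim: N => [|N ih].
  rewrite big_geq // oppr0 fpoly big_nat_cond big1 // => j /andP [/andP [_ hj] _].
  by rewrite expr0n subn_eq0 leqNgt hj mulr0.
have e : - (N.+1)%:R + 1 = - N%:R :> rat by rewrite -addn1 natrD opprD subrK.
have := bern_diff (- (N.+1)%:R) P0; rewrite e => hd.
rewrite big_nat_recr //= -ih.
have -> : bernpoly P (- (N.+1)%:R) =
    bernpoly P (- N%:R) - P%:R * (- (N.+1)%:R) ^+ P.-1 by rewrite -hd; ring.
by rewrite exprNn -signr_odd hodd expr1; ring.
Qed.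

Lemma fermat_nat p k : prime p -> ~~ (p %| k)%N ->
  exists q, (k ^ p.-1 = 1 + q * p)%N.
Proof.
move=> pp pk.
have k0 : (0 < k)%N by rewrite lt0n; apply/eqP => k0; move: pk; rewrite k0 dvdn0.
have p0 := prime_gt0 pp.
have e1 : (0 < k ^ p.-1)%N by rewrite expn_gt0 k0.
have ekp : (k ^ p = k * k ^ p.-1)%N by rewrite -expnS prednK.
have hd : (p %| k ^ p - k)%N.
  rewrite -eqn_mod_dvd; first exact/eqP/fermat_little.
  by rewrite ekp leq_pmulr.
have : (p %| k * (k ^ p.-1 - 1))%N by rewrite mulnBr muln1 -ekp.
rewrite Euclid_dvdM // (negbTE pk) /= => /dvdnP [q hq].
by exists q; rewrite -hq addnC subnK.
Qed.

Lemma fermat_term p k : prime p -> odd p -> (0 < k)%N ->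
  cq p ((p.-1)%:R * (k%:R)^+(p.-1.-1))
       (- (if ~~ (p %| k)%N then (k%:R)^-1 else 0)).
Proof.
move=> pp hodd k0.
have p3 : (2 < p)%N.
  have := prime_gt1 pp; case: p pp hodd => [//|[//|[//|p]]] //.
have hP : p.-1.-1 = (p - 3).+1 by lia.
case: ifP => hk /=.
- have [q hq] := fermat_nat pp hk.
  split.
  + apply: piq_mul => //; [exact: piq_nat | exact: piq_exp (piq_nat _ pp)].
  + by apply: piq_opp; apply: piq_invn.
  rewrite opprK.
  have hy : (k%:R : rat) != 0 by rewrite pnatr_eq0 -lt0n.
  have hz : (k%:R : rat) ^+ p.-1.-1 * k%:R = 1 + (q * p)%N%:R.
    rewrite -exprSr (_ : p.-2.+1 = p.-1)%N; last by lia.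
    by rewrite -natrX hq natrD.
  have -> : (p.-1)%:R * (k%:R)^+(p.-1.-1) + (k%:R)^-1 =
     ((p.-1)%:R * ((k%:R : rat) ^+ p.-1.-1 * k%:R) + 1) / k%:R.
    by field.
  rewrite hz.
  have ep : (p%:R : rat) = (p.-1)%:R + 1 by rewrite natr1 prednK // prime_gt0.
  have -> : ((p.-1)%:R * (1 + (q * p)%N%:R) + 1) / k%:R =
       p%:R * ((1 + (p.-1 * q)%N%:R) * (k%:R)^-1) :> rat.
    rewrite !natrM ep; field; exact: hy.
  apply: pzq_pmul => //; apply: piq_mul => //; last exact: piq_invn.
  by apply: piq_add => //; [exact: (piq_nat 1 pp) | exact: piq_nat].
- move/negbFE: hk => /dvdnP [q ->].
  split.
  + apply: piq_mul => //; [exact: piq_nat | exact: piq_exp (piq_nat _ pp)].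
  + by rewrite oppr0; apply: piq_nat 0 pp.
  rewrite oppr0 subr0 hP exprS natrM.
  have -> : (p.-1)%:R * (q%:R * p%:R * (q%:R * p%:R) ^+ (p - 3)) =
     p%:R * ((p.-1)%:R * q%:R * (q%:R * p%:R) ^+ (p - 3)) :> rat by ring.
  apply: pzq_pmul => //; apply: piq_mul => //; last by apply: piq_exp => //; apply: piq_mul => //; exact: piq_nat.
  by apply: piq_mul => //; exact: piq_nat.
Qed.

Lemma frac_eq (a m : nat) : (0 < m)%N ->
  fracpart (a%:R / m%:R) = a%:R / m%:R - ((a %/ m)%N)%:R.
Proof.
move=> m0; rewrite /fracpart; congr (_ - _).
have hm : (0 : rat) < m%:R by rewrite ltr0n.
rewrite (@floor_def _ _ (a %/ m)%N%:Z) ?pmulrn //.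
rewrite intrD -!pmulrn.
apply/andP; split.
  by rewrite ler_pdivlMr // -natrM ler_nat leq_divM.
by rewrite ltr_pdivrMr // natr1 -natrM ltr_nat ltn_ceil.
Qed.

Theorem corollary2p1 (m n p : nat) (hm : (0 < m)%N) (hn : (0 < n)%N)
    (hp : prime p) (hodd : odd p) (hpm : ~~ (p %| m)%N) :
  [/\ ratcongp p
        (bernpoly p.-1 (fracpart ((p * n)%:R / m%:R)) - bernoulli p.-1)
        (m%:R * \sum_(1 <= r < n.+1) Kp p r%:Z m),
      ratcongp p
        (m%:R * \sum_(1 <= r < n.+1) Kp p r%:Z m)
        (- \sum_(1 <= k < (p * n %/ m).+1 | ~~ (p %| k)%N) (k%:R : rat)^-1)
    & forall r : int, ratcongp p (Kp p r m) (- Kp p (1 - r) m)].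
Proof.
have h2 := part2 n hp hpm hm.
split; last first.
- by move=> r; apply: cq_ratcongp => //; apply: Kp_sym.
- exact: cq_ratcongp.
apply: cq_ratcongp => //; apply: cq_trans (cq_sym h2) => //.
have p3 : (2 < p)%N.
  have := prime_gt1 hp; case: p hp hodd {h2 hpm} => [//|[//|[//|p]]] //.
rewrite frac_eq //.
set N := (p * n %/ m)%N.
apply: (@cq_trans _ _ (bernpoly p.-1 (- N%:R) - bernoulli p.-1)) => //.
  apply: fpoly_cong => //; split.
  - by apply: piq_add => //; [apply: piq_mul => //; [exact: piq_nat | exact: piq_invn] | apply: piq_opp; exact: piq_nat].
  - by apply: piq_opp; exact: piq_nat.
  rewrite opprK subrK natrM -mulrA; apply: pzq_pmul => //.
  by apply: piq_mul => //; [exact: piq_nat | exact: piq_invn].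
rewrite fneg; last 2 first.
- by rewrite -subn1; lia.
- by rewrite -!subn1 oddB ?hodd //; lia.
rewrite [X in cq _ _ (- X)]big_mkcond -sumrN big_nat_cond [X in cq _ _ X]big_nat_cond.
by apply: cq_sum => // k /andP [/andP [k1 _] _]; apply: fermat_term.
Qed.
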